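(* Let $l,t,s,n$ be integers with $n\geq 2s+1$, $2\leq l\leq t$ and $s\geq l+1$. Then $$ex(n,\{K_{l,t},M_{s+1}\},l-1)\leq (l-1)n+ex(2(s-l+1)+1,K_{l,t})-\frac{l(l-1)}{2}.$$
   Context: All graphs are finite and simple. $ex(m,K_{l,t})$ is the maximum number of edges of an $m$-vertex graph with no copy of the complete bipartite graph $K_{l,t}$; $M_{s+1}$ is the matching of $s+1$ disjoint edges. For a graph $G$ with matching number at most $s$, say $X\subseteq V(G)$ is admissible if $|X|+\sum_{i=1}^m\lfloor |V(C_i)|/2\rfloor\leq s$, where $C_1,\dots,C_m$ are the components of $G-X$; let $x(G)$ be the maximum size of an admissible set. Let $\mathscr{G}_x$ be the set of graphs on $n$ vertices containing neither $K_{l,t}$ nor $M_{s+1}$ as a subgraph and with $x(G)=x$, and $ex(n,\{K_{l,t},M_{s+1}\},x)=\max_{G\in\mathscr{G}_x}e(G)$. *)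

(* Defs.v *)
(* A simple graph on the vertex set 'I_n is represented by its
   edge set E : {set {set 'I_n}}, every edge being a 2-element vertex set. *)
From mathcomp Require Import all_boot all_order.
Set Implicit Arguments.
Unset Strict Implicit.
Unset Printing Implicit Defensive.

Section Graphs.
Variable n : nat.
Notation V := 'I_n.

Definition simple_graph (E : {set {set V}}) : bool :=
  [forall e in E, #|e| == 2].

Definition nedges (E : {set {set V}}) : nat := #|E|.

Definition has_Klt (l t : nat) (E : {set {set V}}) : bool :=
  [exists A : {set V}, exists B : {set V},
     [&& #|A| == l, #|B| == t, [disjoint A & B] &
         [forall a in A, forall b in B, [set a; b] \in E]]].

Definition has_matching (k : nat) (E : {set {set V}}) : bool :=
  [exists M : {set {set V}}, [&& M \subset E, #|M| == k & trivIset M]].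

Definition adjD (E : {set {set V}}) (X : {set V}) : rel V :=
  fun u v => [&& u \notin X, v \notin X & [set u; v] \in E].

Definition componentsD (E : {set {set V}}) (X : {set V}) : {set {set V}} :=
  [set [set v | connect (adjD E X) u v] | u in ~: X].

Definition admissible (s : nat) (E : {set {set V}}) (X : {set V}) : bool :=
  #|X| + \sum_(C in componentsD E X) (#|C| %/ 2) <= s.

Definition xG (s : nat) (E : {set {set V}}) : nat :=
  \max_(X : {set V} | admissible s E X) #|X|.

End Graphs.

Definition ex_Klt (m l t : nat) : nat :=
  \max_(E : {set {set 'I_m}} | simple_graph E && ~~ has_Klt l t E) nedges E.

Definition ex_Klt_M_x (n l t s x : nat) : nat :=
  \max_(E : {set {set 'I_n}} |
          [&& simple_graph E, ~~ has_Klt l t E, ~~ has_matching s.+1 E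
            & xG s E == x]) nedges E.

(* Main.v *)
Require Import Defs.
From mathcomp Require Import all_boot all_order.
From mathcomp Require Import zify.
Set Implicit Arguments.
Unset Strict Implicit.
Unset Printing Implicit Defensive.

Section Main.
Variables (n : nat) (E : {set {set 'I_n}}) (X : {set 'I_n}).
Hypothesis Hs : simple_graph E.

Lemma adj_sym : symmetric (adjD E X).
Proof. by move=> u v; rewrite /adjD setUC andbCA. Qed.

Lemma csym : connect_sym (adjD E X).
Proof. exact: sym_connect_sym adj_sym. Qed.

Definition rt := root (adjD E X).
Definition NN := [set v | (v \notin X) && (rt v != v)].
Definition Ein := E :&: [set f : {set 'I_n} | f \subset ~: X].

Lemma Ein_pair (f : {set 'I_n}) : f \in Ein ->
  exists u v, [/\ u != v, f = [set u; v], u \notin X, v \notin X & rt u = rt v].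
Proof.
rewrite inE in_set => /andP [fE fX].
have /cards2P [u [v [uv fe]]] : #|f| == 2 by move/forallP: Hs => /(_ f); rewrite fE.
have uX : u \notin X by rewrite -in_setC (subsetP fX) // fe set21.
have vX : v \notin X by rewrite -in_setC (subsetP fX) // fe set22.
exists u, v; split => //.
apply/rootP; first exact: csym.
by apply: connect1; rewrite /adjD uX vX -fe.
Qed.

Lemma Ein_root (f : {set 'I_n}) a b : f \in Ein -> a \in f -> b \in f -> rt a = rt b.
Proof.
move=> /Ein_pair [u [v [_ -> _ _ ruv]]] /set2P [->|->] /set2P [->|->] //.
Qed.

Lemma Ein_notX (f : {set 'I_n}) a : f \in Ein -> a \in f -> a \notin X.
Proof. by move=> /Ein_pair [u [v [_ -> uX vX _]]] /set2P [->|->]. Qed.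

Lemma notN_root v : v \notin X -> v \notin NN -> rt v = v.
Proof. by move=> vX; rewrite inE vX /= negbK => /eqP. Qed.

Lemma card_NN : #|NN| <= \sum_(C in componentsD E X) (#|C| - 1).
Proof.
rewrite -sum1_card.
rewrite (partition_big (fun v => [set w | connect (adjD E X) v w])
           (mem (componentsD E X))); last first.
  move=> v; rewrite inE => /andP [vX _].
  by apply/imsetP; exists v => //; rewrite inE.
apply: leq_sum => C /imsetP [u uX ->].
rewrite sum1dep_card.
have H1 : rt u \in [set v | connect (adjD E X) u v] by rewrite inE /rt connect_root.
rewrite [Y in _ <= Y - 1](cardsD1 (rt u)) H1 add1n subSS.
rewrite subn0; apply: subset_leq_card; apply/subsetP => v.
rewrite !inE => /andP [/andP [vX rv] /eqP cv].
have uv : connect (adjD E X) u v.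
  have : v \in [set w | connect (adjD E X) v w] by rewrite inE connect0.
  by rewrite cv inE.
have : rt u = rt v by apply/rootP; [exact: csym | exact: uv].
move=> ->; rewrite uv andbT; by rewrite eq_sym.
Qed.


Section Phi.
Variable m : nat.
Hypothesis HN : #|NN| <= m.

Definition phi (v : 'I_n) : 'I_m.+1 :=
  if v \in NN then inord (index v (enum NN)).+1 else ord0.

Lemma phi0 v : v \notin NN -> phi v = ord0.
Proof. by move=> vN; rewrite /phi (negbTE vN). Qed.

Lemma phi_val v : v \in NN -> (phi v : nat) = (index v (enum NN)).+1.
Proof.
move=> vN; rewrite /phi vN inordK // ltnS (leq_trans _ HN) //.
by rewrite cardE index_mem mem_enum.
Qed.

Lemma phiN v : v \in NN -> phi v != ord0.
Proof. by move=> vN; apply/eqP => /(congr1 (@nat_of_ord _)); rewrite phi_val. Qed.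

Lemma phi_inj v w : v \in NN -> w \in NN -> phi v = phi w -> v = w.
Proof.
move=> vN wN /(congr1 (@nat_of_ord _)); rewrite !phi_val // => -[] /index_inj; apply; rewrite ?mem_enum //.
Qed.

Lemma phiNN v : phi v != ord0 -> v \in NN.
Proof. by move=> h; apply: contraT => /phi0 e; rewrite e eqxx in h. Qed.

Lemma key u v : u \notin X -> v \notin X -> rt u = rt v -> u != v -> phi u != phi v.
Proof.
move=> uX vX r uv.
case uN: (u \in NN); case vN: (v \in NN).
- by apply: contraNneq uv => /(phi_inj uN vN) ->.
- by rewrite (phi0 (negbT vN)) phiN.
- by rewrite (phi0 (negbT uN)) eq_sym phiN.
- move: r; rewrite (notN_root uX (negbT uN)) (notN_root vX (negbT vN)) => e.
  by rewrite e eqxx in uv.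
Qed.

Definition Eimg := [set phi @: f | f : {set 'I_n} in Ein].

Lemma img_pair u v : phi @: [set u; v] = [set phi u; phi v].
Proof. by rewrite imsetU1 imset_set1. Qed.

Lemma Eimg_simple : simple_graph Eimg.
Proof.
apply/forallP => g; apply/implyP => /imsetP [f fE ->].
case: (Ein_pair fE) => u [v [uv -> uX vX r]].
by rewrite img_pair cards2 key.
Qed.

Lemma Ein_sub (f f' : {set 'I_n}) : f \in Ein -> f' \in Ein ->
  phi @: f = phi @: f' -> f \subset f'.
Proof.
move=> fE f'E e; apply/subsetP => w wf.
have hN : forall z, z \in f -> z \in NN -> z \in f'.
  move=> z zf zN.
  have : phi z \in phi @: f' by rewrite -e imset_f.
  case/imsetP => z' z'f' ez.
  have z'N : z' \in NN by apply: phiNN; rewrite -ez phiN.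
  by rewrite (phi_inj zN z'N ez).
case wN: (w \in NN); first by apply: hN.
have wX := Ein_notX fE wf.
have rw := notN_root wX (negbT wN).
case: (Ein_pair fE) => u [v [uv fe _ _ _]].
have [z [zf zw]] : exists z, z \in f /\ z != w.
  move: wf; rewrite fe => /set2P [->|->].
    by exists v; rewrite set22 eq_sym.
  by exists u; rewrite set21.
have zN : z \in NN.
  apply: contraT => zN.
  have : z = w by rewrite -(notN_root (Ein_notX fE zf) zN) (Ein_root fE zf wf) rw.
  by move=> ez; rewrite ez eqxx in zw.
have zf' := hN z zf zN.
have : phi w \in phi @: f' by rewrite -e imset_f.
case/imsetP => w' w'f' ew.
have w'N : w' \notin NN.
  apply/negP => w'N; move: (phiN w'N); by rewrite -ew phi0 ?wN ?eqxx.
have : w' = w.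
  by rewrite -(notN_root (Ein_notX f'E w'f') w'N) (Ein_root f'E w'f' zf')
     (Ein_root fE zf wf) rw.
by move=> <-.
Qed.

Lemma card_Eimg : #|Eimg| = #|Ein|.
Proof.
rewrite card_in_imset // => f f' fE f'E e.
by apply/eqP; rewrite eqEsubset !Ein_sub.
Qed.

Lemma EDGE i j : i != j -> [set i; j] \in Eimg ->
  exists u v, [/\ [set u; v] \in Ein, phi u = i & phi v = j].
Proof.
move=> ij /imsetP [f fE e].
have : i \in phi @: f by rewrite -e set21.
case/imsetP => u uf iu.
have : j \in phi @: f by rewrite -e set22.
case/imsetP => v vf jv.
exists u, v; split => //.
have uv : u != v by apply: contraNneq ij => uv; rewrite iu jv uv.
case: (Ein_pair fE) => a [b [ab fe _ _ _]].
suff -> : [set u; v] = f by [].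
apply/eqP; rewrite eqEcard cards2 uv fe cards2 ab andbT.
by apply/subsetP => x /set2P [->|->]; rewrite -fe.
Qed.


Section Free.
Variable x0 : 'I_n.
Definition pre (j : 'I_m.+1) := odflt x0 [pick v in NN | phi v == j].

Lemma pre_phi v : v \in NN -> pre (phi v) = v.
Proof.
move=> vN; rewrite /pre; case: pickP => [w /andP [wN /eqP e] | /(_ v)].
  by rewrite /= (phi_inj wN vN e).
by rewrite vN eqxx.
Qed.

Lemma NZ i u : phi u = i -> i != ord0 -> u \in NN /\ pre i = u.
Proof.
move=> pu i0; have uN : u \in NN by apply: phiNN; rewrite pu.
by split => //; rewrite -pu pre_phi.
Qed.

Variables l t : nat.
Hypotheses (l2 : 2 <= l) (t2 : 2 <= t).

Lemma nonzero_in (A : {set 'I_m.+1}) : 2 <= #|A| -> exists2 a, a \in A & a != ord0.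
Proof.
move=> cA.
have : 0 < #|A :\ ord0|.
  have : #|A| <= #|A :\ ord0|.+1 by rewrite [Y in Y <= _](cardsD1 ord0 A) -(add1n #|A :\ ord0|) leq_add2r leq_b1.
  lia.
by move=> /card_gt0P [a]; rewrite in_setD1 => /andP [a0 aA]; exists a.
Qed.

Lemma Eimg_free : ~~ has_Klt l t E -> ~~ has_Klt l t Eimg.
Proof.
move=> HK; apply/negP => /existsP [A /existsP [B /and4P [/eqP cA /eqP cB dAB /forallP hAB]]].
have hE : forall i j, i \in A -> j \in B -> [set i; j] \in Eimg.
  by move=> i j iA jB; move: (hAB i); rewrite iA /= => /forall_inP /(_ j jB).
have nAB : forall i j, i \in A -> j \in B -> i != j.
  by move=> i j iA jB; apply: contraTneq jB => <-; rewrite (disjointFr dAB iA).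
have ED : forall i j, i \in A -> j \in B ->
    exists u v, [/\ [set u; v] \in Ein, phi u = i & phi v = j].
  by move=> i j iA jB; apply: EDGE; [apply: nAB | apply: hE].
have [as_ asA as0] : exists2 a, a \in A & a != ord0 by apply: nonzero_in; rewrite cA.
have [bs bsB bs0] : exists2 b, b \in B & b != ord0 by apply: nonzero_in; rewrite cB; lia.
pose rho := rt (pre as_).
have Hab : rt (pre bs) = rho.
  have [u [v [fE pu pv]]] := ED as_ bs asA bsB.
  rewrite /rho; have [_ ->] := NZ pu as0; have [_ ->] := NZ pv bs0.
  exact: (Ein_root fE (set22 u v) (set21 u v)).
have RA : forall i, i \in A -> i != ord0 ->
    [/\ pre i \in NN, phi (pre i) = i & rt (pre i) = rho].
  move=> i iA i0; have [u [v [fE pu pv]]] := ED i bs iA bsB.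
  have [uN ->] := NZ pu i0; have [_ pb] := NZ pv bs0.
  by split => //; rewrite -Hab pb (Ein_root fE (set21 u v) (set22 u v)).
have RB : forall j, j \in B -> j != ord0 ->
    [/\ pre j \in NN, phi (pre j) = j & rt (pre j) = rho].
  move=> j jB j0; have [u [v [fE pu pv]]] := ED as_ j asA jB.
  have [_ pa] := NZ pu as0; have [vN ->] := NZ pv j0.
  by split => //; rewrite /rho pa (Ein_root fE (set22 u v) (set21 u v)).
have RAB : forall k, (k \in A) || (k \in B) -> k != ord0 ->
    [/\ pre k \in NN, phi (pre k) = k & rt (pre k) = rho].
  by move=> k /orP [] kin k0; [apply: RA | apply: RB].
have rhoN : rho \notin NN.
  by rewrite inE negb_and negbK /rho /rt root_root ?eqxx ?orbT //; exact: csym.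
pose lift (j : 'I_m.+1) := if j == ord0 then rho else pre j.
have L1 : forall i j u v, [set u; v] \in Ein -> phi u = i -> phi v = j -> i != j ->
    (j != ord0 -> rt (pre j) = rho) -> lift i = u.
  move=> i j u v fE pu pv ij hj; rewrite /lift.
  case: eqP => [i0 | /eqP i0]; last by have [_ ->] := NZ pu i0.
  have j0 : j != ord0 by rewrite -i0 eq_sym.
  have uN : u \notin NN by apply/negP => /phiN; rewrite pu i0 eqxx.
  rewrite -(notN_root (Ein_notX fE (set21 u v)) uN) (Ein_root fE (set21 u v) (set22 u v)).
  by have [_ <-] := NZ pv j0; rewrite hj.
have LE : forall i j, i \in A -> j \in B -> [set lift i; lift j] \in E.
  move=> i j iA jB; have [u [v [fE pu pv]]] := ED i j iA jB.
  have ij := nAB i j iA jB.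
  rewrite (L1 i j u v) //; last by move=> j0; have [] := RB j jB j0.
  rewrite (L1 j i v u) //; first by move: fE; rewrite inE => /andP [].
  - by rewrite setUC.
  - by rewrite eq_sym.
  by move=> i0; have [] := RA i iA i0.
have INJ : forall i j, (i \in A) || (i \in B) -> (j \in A) || (j \in B) ->
    lift i = lift j -> i = j.
  move=> i j hi hj; rewrite /lift.
  case: eqP => [-> | /eqP i0]; case: eqP => [-> | /eqP j0] //.
  - by move=> e; have [] := RAB j hj j0; rewrite -e (negbTE rhoN).
  - by move=> e; have [] := RAB i hi i0; rewrite e (negbTE rhoN).
  move=> e; have [_ pi _] := RAB i hi i0; have [_ pj _] := RAB j hj j0.
  by rewrite -pi -pj e.
apply: (negP HK); apply/existsP; exists (lift @: A); apply/existsP; exists (lift @: B).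
rewrite card_in_imset; last by move=> i j iA jA; apply: INJ; rewrite ?iA ?jA.
rewrite card_in_imset; last by move=> i j iB jB; apply: INJ; rewrite ?iB ?jB ?orbT.
rewrite cA cB !eqxx /=.
apply/andP; split.
  apply/pred0P => x /=; apply/negP => /andP [/imsetP [i iA ->] /imsetP [j jB e]].
  have := INJ i j; rewrite iA jB orbT => /(_ isT isT e) ij.
  by move: (nAB i j iA jB); rewrite ij eqxx.
apply/forall_inP => a /imsetP [i iA ->]; apply/forall_inP => b /imsetP [j jB ->].
exact: LE.
Qed.

End Free.

End Phi.

End Main.

Lemma C2_add p a : 'C(p + a, 2) = 'C(p, 2) + a * p + 'C(a, 2).
Proof.
elim: a => [|a IH]; first by rewrite addn0 mul0n addn0 bin0n addn0.
rewrite addnS binS bin1 IH binS bin1 mulSn; lia.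
Qed.

Lemma C2_double a : 2 * 'C(a, 2) + a = a * a.
Proof.
elim: a => [|a IH] //.
rewrite binS bin1 mulSn mulnS; lia.
Qed.

Lemma card_2sub (T : finType) (B : {set T}) :
  'C(#|B|, 2) <= #|[set e : {set T} | (#|e| == 2) && (e \subset B)]|.
Proof.
pose S := {x : T | x \in B}.
have cS : #|{: S}| = #|B| by rewrite card_sig; apply: eq_card => x; rewrite inE.
rewrite -cS -card_draws.
rewrite -(card_imset _ (imset_inj val_inj)).
apply: subset_leq_card; apply/subsetP => e /imsetP [A]; rewrite inE => cA ->.
rewrite card_imset; last exact: val_inj.
move: cA; rewrite inE => /eqP ->; rewrite eqxx /=.
by apply/subsetP => x /imsetP [y _ ->]; exact: (valP y).
Qed.

Theorem lemma3p2 (l t s n : nat) :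
  2 * s + 1 <= n -> 2 <= l -> l <= t -> l + 1 <= s ->
  ex_Klt_M_x n l t s (l - 1)
    <= (l - 1) * n + ex_Klt (2 * (s - l + 1) + 1) l t - l * (l - 1) %/ 2.
Proof.
move=> hn hl hlt hs.
apply/bigmax_leqP => E /and4P [Hs HK _ /eqP Hx].
have [X Xadm Xc] : exists2 X, admissible s E X & #|X| = l - 1.
  case: (pickP (fun X => admissible s E X)) => [X0 h0 | h0].
    have [X Xa e] := @eq_bigmax_cond _ (fun X => admissible s E X) (fun X => #|X|)
      (ltac:(by apply/card_gt0P; exists X0)).
    exists X => //; rewrite -Hx /xG; exact: esym e.
  move: Hx; rewrite /xG big_pred0 //; lia.
set k := s - l + 1.
have hsum : \sum_(C in componentsD E X) (#|C| %/ 2) <= k.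
  move: Xadm; rewrite /admissible Xc /k; lia.
have hNN : #|NN E X| <= 2 * k.
  apply: (leq_trans (card_NN E X)).
  apply: (@leq_trans (\sum_(C in componentsD E X) (2 * (#|C| %/ 2)))).
    by apply: leq_sum => C _; lia.
  by rewrite -big_distrr leq_mul2l hsum orbT.
have n0 : 0 < n by lia.
pose x0 : 'I_n := Ordinal n0.
rewrite [2 * k + 1]addn1.
have hI : #|Ein E X| <= ex_Klt (2 * k).+1 l t.
  rewrite -(card_Eimg Hs hNN).
  apply: (@leq_bigmax_cond _ (fun E' => simple_graph E' && ~~ has_Klt l t E')
            (fun E' => nedges E')).
  rewrite (Eimg_simple Hs hNN) /=.
  by apply: (Eimg_free Hs hNN x0) => //; lia.
pose P := [set f : {set 'I_n} | f \subset ~: X].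
pose T2 := [set f : {set 'I_n} | #|f| == 2].
have hD : #|E :\: P| <= 'C(n, 2) - 'C(n - #|X|, 2).
  have sub : E :\: P \subset T2 :\: P.
    apply: setSD; apply/subsetP => f fE; rewrite inE.
    by move/forallP: Hs => /(_ f); rewrite fE.
  apply: (leq_trans (subset_leq_card sub)).
  rewrite cardsD /T2 card_draws card_ord.
  have cX : #|~: X| = n - #|X| by have := cardsC X; rewrite card_ord; lia.
  have := card_2sub (~: X); rewrite cX.
  have -> : [set e : {set 'I_n} | (#|e| == 2) && (e \subset ~: X)] =
            [set f : {set 'I_n} | #|f| == 2] :&: P by apply/setP => f; rewrite !inE.
  exact: leq_sub2l.
have hE : nedges E = #|Ein E X| + #|E :\: P| by rewrite /nedges -(cardsID P E).
have hX : #|X| <= n by have := cardsC X; rewrite card_ord; lia.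
have hC := C2_add (n - #|X|) #|X|.
rewrite subnK // in hC.
have hC2 := C2_double #|X|.
have hm : (l - 1) * n = #|X| * (n - #|X|) + #|X| * #|X|.
  by rewrite Xc -mulnDr subnK // -Xc.
have hl2 : l * (l - 1) = #|X| * #|X| + #|X|.
  have -> : l = #|X| + 1 by lia.
  by rewrite addnK mulnDl mul1n.
rewrite hE hm hl2.
move: hI hD hC hC2; rewrite Xc.
have -> : l - 1 = #|X| by [].
move: (#|X| * (n - #|X|)) (#|X| * #|X|) => ap aa; lia.
Qed.
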